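(* Let $R$ be an integral domain with field of fractions $K$, and let $n$ be a nonnegative integer. If $D\colon R\to R$ belongs to the closure of $\mathcal{O}^n_0(R)$ in $R^R$, then $D/j$ (i.e. $x\mapsto D(x)/x$), as a map from the semigroup $R^*$ to $K$, is a generalized polynomial of degree at most $n$.
   Context: Rings are commutative with unit. A derivation on $R$ is a map $d\colon R\to R$ with $d(x+y)=d(x)+d(y)$ and $d(xy)=d(x)y+d(y)x$. A differential operator of degree at most $n$ on $R$ is an $R$-linear combination of finitely many maps $d_1\circ\cdots\circ d_k$, $d_i$ derivations, $k\le n$ (for $k=0$ the identity map $j$). $\mathcal{O}^n_0(R)$ is the set of such operators $D$ with $D(1)=0$. $R^R$ carries the product topology with $R$ discrete. $R^*$ is the semigroup $R\setminus\{0\}$ under multiplication. For $f$ on an abelian semigroup $G$, $\Delta_g f(x)=f(x\cdot g)-f(x)$; $f$ is a generalized polynomial of degree at most $n$ if $\Delta_{g_1}\cdots\Delta_{g_{n+1}}f=0$ for all $g_1,\dots,g_{n+1}\in G$. *)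

(* Defs.v *)
From Stdlib Require List.
From HB Require Import structures.
From mathcomp Require Import all_boot all_order all_algebra.
Set Implicit Arguments. Unset Strict Implicit. Unset Printing Implicit Defensive.
Import GRing.Theory.
Local Open Scope ring_scope.

Definition is_derivation (R : comNzRingType) (d : R -> R) : Prop :=
  (forall x y, d (x + y) = d x + d y) /\
  (forall x y, d (x * y) = d x * y + d y * x).

Definition comp_list (R : Type) (ds : seq (R -> R)) : R -> R :=
  foldr (fun d f => d \o f) id ds.

Definition is_diff_op (R : comNzRingType) (n : nat) (D : R -> R) : Prop :=
  exists terms : seq (R * seq (R -> R)),
    (forall t, List.In t terms ->
       (size t.2 <= n)%N /\ forall d, List.In d t.2 -> is_derivation d) /\
    forall x, D x = \sum_(t <- terms) t.1 * comp_list t.2 x.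

Definition O_n_0 (R : comNzRingType) (n : nat) (D : R -> R) : Prop :=
  is_diff_op n D /\ D 1 = 0.

(* Closure in R^R with the product topology, R discrete:
   D is in the closure of S iff every basic neighbourhood of D
   (maps agreeing with D on a finite set of points) meets S. *)
Definition in_pointwise_closure (R : Type) (S : (R -> R) -> Prop)
    (D : R -> R) : Prop :=
  forall F : seq R, exists D', S D' /\ forall x, List.In x F -> D' x = D x.

(* Difference operator on functions from the multiplicative semigroup R^*
   (represented as functions on R, only evaluated at nonzero points). *)
Definition Delta (R : comNzRingType) (V : zmodType) (g : R) (f : R -> V) : R -> V :=
  fun x => f (x * g) - f x.

Definition gen_poly_semigroup (R : comNzRingType) (V : zmodType) (n : nat)
    (f : R -> V) : Prop :=
  forall gs : seq R, size gs = n.+1 -> (forall g, g \in gs -> g != 0) ->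
    forall x : R, x != 0 -> foldr (@Delta R V) f gs x = 0.

(* Main.v *)
Require Import Defs.
From HB Require Import structures.
From mathcomp Require Import all_boot all_order all_algebra.
From mathcomp Require Import ring.
Import GRing.Theory.
Local Open Scope ring_scope.

Section Aux.
Variable R : idomainType.
Notation tf := (@FracField.tofrac R).
Notation V := {fraction R}.

Lemma foldr_Delta_ext (gs : seq R) (f f' : R -> V) :
  f =1 f' -> foldr (@Delta R V) f gs =1 foldr (@Delta R V) f' gs.
Proof.
move=> E; elim: gs => [|g gs IH] x //=.
by rewrite /Delta !IH.
Qed.

Lemma foldr_Delta_lin (I : Type) (s : seq I) (a : I -> V) (fs : I -> R -> V)
  (gs : seq R) (f : R -> V) :
  (forall x, f x = \sum_(i <- s) a i * fs i x) ->
  forall x, foldr (@Delta R V) f gs x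
            = \sum_(i <- s) a i * foldr (@Delta R V) (fs i) gs x.
Proof.
move=> E; elim: gs => [|g gs IH] x //=.
rewrite /Delta !IH -sumrB; apply: eq_bigr => i _.
by rewrite mulrBr.
Qed.

Lemma deriv_sum (d : R -> R) (I : Type) (s : seq I) (F : I -> R) :
  is_derivation d -> d (\sum_(i <- s) F i) = \sum_(i <- s) d (F i).
Proof.
move=> [Dadd _]; have d0 : d 0 = 0.
  by have := Dadd 0 0; rewrite addr0 => h; apply: (addrI (d 0)); rewrite -h addr0.
elim: s => [|i s IH]; first by rewrite !big_nil.
by rewrite !big_cons Dadd IH.
Qed.

Lemma decomp (ws : seq (R -> R)) :
  (forall d, List.In d ws -> is_derivation d) ->
  exists us : seq (seq (R -> R) * (R -> R)),
    (forall p, List.In p us -> (size p.1 < size ws)%N /\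
        forall d, List.In d p.1 -> is_derivation d) /\
    forall x g, comp_list ws (x * g)
       = comp_list ws x * g + \sum_(p <- us) comp_list p.1 x * p.2 g.
Proof.
elim: ws => [|d ws IH] Hws.
  exists [::]; split => // x g; by rewrite big_nil addr0.
have Hd : is_derivation d by apply: Hws; left.
have [us [Hus Eus]] : exists us : seq (seq (R -> R) * (R -> R)),
    (forall p, List.In p us -> (size p.1 < size ws)%N /\
        forall d, List.In d p.1 -> is_derivation d) /\
    forall x g, comp_list ws (x * g)
       = comp_list ws x * g + \sum_(p <- us) comp_list p.1 x * p.2 g.
  by apply: IH => e He; apply: Hws; right.
exists ((ws, d) :: [seq (d :: p.1, p.2) | p <- us] ++ [seq (p.1, d \o p.2) | p <- us]).
split.
  move=> p /= [<-|]; first by split => // e He; apply: Hws; right.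
  move=> H0; case: (List.in_app_or _ _ _ H0) => H; have [q [<- Hq]] := proj1 (List.in_map_iff _ _ _) H;
    have [Hs Hq'] := Hus q Hq; split => //=.
  - by move=> e [<-|He] //; apply: Hq'.
  - exact: ltnW.
move=> x g /=.
have [Dadd Dmul] := Hd.
rewrite Eus Dadd Dmul deriv_sum // big_cons big_cat !big_map /=.
under eq_bigr => p _ do rewrite Dmul.
rewrite big_split /=.
have -> : \sum_(i <- us) d (i.2 g) * comp_list i.1 x
   = \sum_(i <- us) comp_list i.1 x * d (i.2 g).
  by apply: eq_bigr => p _; rewrite mulrC.
rewrite [d g * _]mulrC; rewrite !addrA.
done.
Qed.


Definition phi (h : R -> R) : R -> V := fun x => tf (h x) / tf x.

Lemma phi_step (ws : seq (R -> R)) :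
  (forall d, List.In d ws -> is_derivation d) ->
  exists us : seq (seq (R -> R) * (R -> R)),
    (forall p, List.In p us -> (size p.1 < size ws)%N /\
        forall d, List.In d p.1 -> is_derivation d) /\
    forall g, g != 0 -> forall x, Delta g (phi (comp_list ws)) x
       = \sum_(p <- us) (tf (p.2 g) / tf g) * phi (comp_list p.1) x.
Proof.
move=> /decomp [us [Hus Eus]]; exists us; split => // g g0 x.
rewrite /Delta /phi.
have [->|x0] := eqVneq x 0.
  rewrite mul0r subrr tofrac0 invr0 big1 // => p _; by rewrite mulr0 mulr0.
rewrite Eus tofracD tofracM rmorph_sum /= tofracM.
have X0 : tf x != 0 by rewrite tofrac_eq0.
have G0 : tf g != 0 by rewrite tofrac_eq0.
rewrite mulrDl mulr_suml addrAC.
rewrite -mulf_div divff // mulr1 subrr add0r.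
by apply: eq_bigr => p _; rewrite tofracM -mulf_div mulrC.
Qed.

Lemma sum0_In (I : Type) (s : seq I) (F : I -> V) :
  (forall i, List.In i s -> F i = 0) -> \sum_(i <- s) F i = 0.
Proof.
elim: s => [|i s IH] H; first by rewrite big_nil.
by rewrite big_cons H ?IH ?add0r //; [move=> j Hj; apply: H; right | left].
Qed.

Lemma comp_gp k : forall ws gs,
  (size ws < k)%N -> (forall d, List.In d ws -> is_derivation d) ->
  (forall g, g \in gs -> g != 0) -> (size ws < size gs)%N ->
  forall x, foldr (@Delta R V) (phi (comp_list ws)) gs x = 0.
Proof.
elim: k => [|k IH] ws gs //.
move=> Hk Hws; case/lastP: gs => [|gs g] //.
move=> Hgs; rewrite size_rcons ltnS => Hsz x.
rewrite foldr_rcons.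
have g0 : g != 0 by apply: Hgs; rewrite mem_rcons mem_head.
have [us [Hus Eus]] := @phi_step ws Hws.
rewrite (@foldr_Delta_lin _ us (fun p => tf (p.2 g) / tf g)
          (fun p => phi (comp_list p.1)) gs _ (Eus g g0)).
apply: sum0_In => p Hp; have [Hs Hd] := Hus p Hp.
rewrite IH ?mulr0 //.
- exact: leq_trans Hs Hk.
- by move=> h Hh; apply: Hgs; rewrite mem_rcons in_cons Hh orbT.
- exact: leq_trans Hs Hsz.
Qed.

Lemma diffop_gp n (D : R -> R) : is_diff_op n D ->
  gen_poly_semigroup n (phi D).
Proof.
move=> [terms [Ht ED]] gs Hsz Hgs x _.
rewrite (@foldr_Delta_lin _ terms (fun t => tf t.1)
          (fun t => phi (comp_list t.2)) gs (phi D)).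
  apply: sum0_In => t Htt; have [Hs Hd] := Ht t Htt.
  by rewrite (@comp_gp (size t.2).+1) ?mulr0 // Hsz ltnS.
move=> y; rewrite /phi ED rmorph_sum /= mulr_suml.
by apply: eq_bigr => t _; rewrite tofracM mulrA.
Qed.

Fixpoint pts (gs : seq R) (x : R) : seq R :=
  match gs with
  | [::] => [:: x]
  | g :: gs' => pts gs' (x * g) ++ pts gs' x
  end.

Lemma foldr_Delta_loc (gs : seq R) (f f' : R -> V) x :
  (forall y, List.In y (pts gs x) -> f y = f' y) ->
  foldr (@Delta R V) f gs x = foldr (@Delta R V) f' gs x.
Proof.
elim: gs x => [|g gs IH] x H /=; first by apply: H; left.
rewrite /Delta !IH // => y Hy; apply: H; apply: List.in_or_app; by [left|right].
Qed.

End Aux.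

Theorem lemma2p5 (R : idomainType) (n : nat) (D : R -> R) :
  in_pointwise_closure (@O_n_0 R n) D ->
  gen_poly_semigroup n
    (fun x : R => @FracField.tofrac R (D x) / @FracField.tofrac R x).
Proof.
move=> HD gs Hsz Hgs x x0.
have [D' [[HD' _] E]] := HD (@pts R gs x).
rewrite (@foldr_Delta_loc R _ _ (@phi R D')).
  exact: (@diffop_gp _ n _ HD').
by move=> y Hy; rewrite /phi E.
Qed.
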